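(* Let $m>6C^2(C+1)$ and $l_m=\lfloor\frac{m-2}{C+1}\rfloor$. If $\sum_{i=1}^n a_iP_m(x_i)$ is a leaf of the escalator tree of $m$-gonal forms with $n\ge l_m$ and $a_{l_m}\ge C+1$, then $$n\le \left(1-\frac{1}{(C+1)^2}\right)(m-2)+\frac{C+2}{C+1}.$$
   Context: For an integer $m\ge 3$ and $x\in\mathbb Z$ put $P_m(x)=\frac{m-2}{2}x^2-\frac{m-4}{2}x$. An $m$-gonal form of rank $n$ is $a_1P_m(x_1)+\cdots+a_nP_m(x_n)$ with positive integers $a_1\le\cdots\le a_n$ and $x_i\in\mathbb Z$; it represents $N$ if $N$ is a value at some integer vector, and is universal if it represents every positive integer. The truant of a non-universal form is the smallest positive integer it does not represent (the empty form has truant $1$). The escalator tree of $m$-gonal forms is the rooted tree whose root is the empty form; a universal node is a leaf, and a non-universal node $\sum_{i=1}^k a_iP_m(x_i)$ has as children exactly all forms $\sum_{i=1}^{k+1}a_iP_m(x_i)$ with $a_{k+1}\ge a_k$ (any $a_1\ge1$ if $k=0$) that represent the truant of the node. Standing assumption: $C$ is a fixed absolute constant such that for every $m\ge3$, every $m$-gonal form that represents every positive integer in $[1,C(m-2)]$ is universal. *)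

(* Defs.v *)
From Stdlib Require Import Reals ZArith List Lia.
Import ListNotations.
Open Scope R_scope.

(* P_m(x) = ((m-2) x^2 - (m-4) x) / 2 ; the numerator is always even. *)
Definition Pm (m : nat) (x : Z) : Z :=
  (((Z.of_nat m - 2) * x * x - (Z.of_nat m - 4) * x) / 2)%Z.

Definition is_form (a : list nat) : Prop :=
  (forall k, In k a -> (0 < k)%nat) /\
  (forall i, (S i < length a)%nat -> (nth i a 0 <= nth (S i) a 0)%nat).

Fixpoint form_value (m : nat) (a : list nat) (x : list Z) : Z :=
  match a, x with
  | ak :: a', xk :: x' => (Z.of_nat ak * Pm m xk + form_value m a' x')%Z
  | _, _ => 0%Z
  end.

Definition represents (m : nat) (a : list nat) (N : nat) : Prop :=
  exists x : list Z, length x = length a /\ form_value m a x = Z.of_nat N.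

Definition universal (m : nat) (a : list nat) : Prop :=
  forall N : nat, (0 < N)%nat -> represents m a N.

Definition is_truant (m : nat) (a : list nat) (t : nat) : Prop :=
  (0 < t)%nat /\ ~ represents m a t /\
  (forall k, (0 < k < t)%nat -> represents m a k).

Inductive escalator_node (m : nat) : list nat -> Prop :=
  | esc_root : escalator_node m []
  | esc_child : forall (a : list nat) (t b : nat),
      escalator_node m a ->
      ~ universal m a ->
      is_truant m a t ->
      (1 <= b)%nat ->
      (forall k, In k a -> (k <= b)%nat) ->
      represents m (a ++ [b]) t ->
      escalator_node m (a ++ [b]).

Definition escalator_leaf (m : nat) (a : list nat) : Prop :=
  escalator_node m a /\ universal m a.

Definition standing_assumption (C : R) : Prop :=
  forall (m : nat) (a : list nat), (3 <= m)%nat -> is_form a ->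
    (forall N : nat, (1 <= N)%nat -> INR N <= C * (INR m - 2) -> represents m a N) ->
    universal m a.

Definition l_m (C : R) (m : nat) : nat := Z.to_nat (Int_part ((INR m - 2) / (C + 1))).

(* Main.v *)
Require Import Defs.
From Stdlib Require Import Reals ZArith List.
From Stdlib Require Import Lia Lra Classical.
Import ListNotations.
Open Scope R_scope.

Lemma Pm_nonneg m z : (3 <= m)%nat -> (0 <= Pm m z)%Z.
Proof.
  intro Hm. unfold Pm. apply Z.div_pos; [|lia].
  assert (HM : (3 <= Z.of_nat m)%Z) by lia.
  destruct (Z.le_gt_cases 1 z).
  - assert (H0 : (0 <= (Z.of_nat m - 2) * (z - 1))%Z) by (apply Z.mul_nonneg_nonneg; lia).
    assert (H1 : (0 <= (Z.of_nat m - 2) * z - (Z.of_nat m - 4))%Z) by nia.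
    replace ((Z.of_nat m - 2) * z * z - (Z.of_nat m - 4) * z)%Z
      with (z * ((Z.of_nat m - 2) * z - (Z.of_nat m - 4)))%Z by ring.
    apply Z.mul_nonneg_nonneg; lia.
  - destruct (Z.eq_dec z 0) as [->|Hz0]; [lia|].
    assert (H0 : (0 <= (Z.of_nat m - 2) * (- z - 1))%Z) by (apply Z.mul_nonneg_nonneg; lia).
    assert (H1 : ((Z.of_nat m - 2) * z - (Z.of_nat m - 4) <= 0)%Z) by nia.
    replace ((Z.of_nat m - 2) * z * z - (Z.of_nat m - 4) * z)%Z
      with ((- z) * (- ((Z.of_nat m - 2) * z - (Z.of_nat m - 4))))%Z by ring.
    apply Z.mul_nonneg_nonneg; lia.
Qed.

Lemma Pm0 m : Pm m 0 = 0%Z.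
Proof. unfold Pm. rewrite !Z.mul_0_r. reflexivity. Qed.

Lemma Pm1 m : Pm m 1 = 1%Z.
Proof. unfold Pm.
  replace ((Z.of_nat m - 2) * 1 * 1 - (Z.of_nat m - 4) * 1)%Z with 2%Z by ring.
  reflexivity. Qed.

Lemma fv_nonneg m a x : (3 <= m)%nat -> (0 <= form_value m a x)%Z.
Proof.
  intro Hm. revert x; induction a as [|k a IH]; intros [|z x]; simpl; try lia.
  specialize (IH x). pose proof (Pm_nonneg m z Hm). nia.
Qed.

Lemma fv_app m a b x z : length x = length a ->
  form_value m (a ++ [b]) (x ++ [z]) = (form_value m a x + Z.of_nat b * Pm m z)%Z.
Proof.
  revert x; induction a as [|k a IH]; intros [|y x] H; simpl in *; try discriminate.
  - lia.
  - rewrite IH by lia. lia.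
Qed.

Lemma fv_zero m a : form_value m a (repeat 0%Z (length a)) = 0%Z.
Proof. induction a; simpl; auto. rewrite IHa, Pm0. lia. Qed.

Lemma split_last (x : list Z) n : length x = S n ->
  exists x' z, x = x' ++ [z] /\ length x' = n.
Proof.
  intro H. destruct (exists_last (l:=x)) as [x' [z Hx]].
  - intro E; subst; discriminate.
  - exists x', z. split; auto. subst. rewrite length_app in H. simpl in H. lia.
Qed.

Lemma rep_ext m a b N : represents m a N -> represents m (a ++ [b]) N.
Proof.
  intros [x [Hl Hv]]. exists (x ++ [0%Z]). split.
  - rewrite !length_app; simpl; lia.
  - rewrite fv_app by auto. rewrite Pm0. lia.
Qed.

Lemma rep_add m a b N : (N = 0 \/ represents m a N)%nat -> represents m (a ++ [b]) (N + b).
Proof.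
  intros [HN | [x [Hl Hv]]].
  - subst. exists (repeat 0%Z (length a) ++ [1%Z]). split.
    + rewrite !length_app, repeat_length; simpl; lia.
    + rewrite fv_app by (apply repeat_length). rewrite fv_zero, Pm1. lia.
  - exists (x ++ [1%Z]). split.
    + rewrite !length_app; simpl; lia.
    + rewrite fv_app by auto. rewrite Pm1. lia.
Qed.

Lemma cover m a : (3 <= m)%nat -> escalator_node m a ->
  forall N, (1 <= N <= list_sum a)%nat -> represents m a N.
Proof.
  intros Hm Hn. induction Hn as [|a t b Hn IH Hu [Ht0 [Htn Htr]] Hb Hin Hrep]; intros N HN.
  - simpl in HN. lia.
  - assert (Hts : (list_sum a < t)%nat).
    { destruct (Nat.lt_ge_cases (list_sum a) t) as [|Hge]; auto.
      exfalso. apply Htn. apply IH. lia. }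
    assert (Hbt : (b <= t)%nat).
    { destruct (Nat.le_gt_cases b t) as [|Hgt]; auto. exfalso. apply Htn.
      destruct Hrep as [x [Hl Hv]]. rewrite length_app in Hl. simpl in Hl.
      destruct (split_last x (length a)) as [x' [z [Ex Hx']]]; [lia|]. subst x.
      rewrite fv_app in Hv by auto.
      pose proof (fv_nonneg m a x' Hm). pose proof (Pm_nonneg m z Hm).
      destruct (Z.eq_dec (Pm m z) 0) as [E|E].
      - exists x'. split; auto. rewrite E in Hv. lia.
      - exfalso. nia. }
    rewrite list_sum_app in HN. simpl in HN.
    destruct (Nat.lt_ge_cases N t).
    + apply rep_ext. apply Htr. lia.
    + replace N with ((N - b) + b)%nat by lia. apply rep_add.
      destruct (Nat.eq_dec (N - b) 0); [left; auto | right]. apply Htr. lia.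
Qed.

Lemma node_form m a : escalator_node m a -> is_form a.
Proof.
  intro Hn. induction Hn as [|a t b Hn IH Hu Ht Hb Hin Hrep].
  - split; simpl; intros; [contradiction | lia].
  - destruct IH as [Hpos Hsort]. split.
    + intros k Hk. apply in_app_or in Hk as [Hk|Hk]; auto. simpl in Hk. destruct Hk; [lia|contradiction].
    + intros i Hi. rewrite length_app in Hi. simpl in Hi.
      destruct (Nat.lt_ge_cases (S i) (length a)).
      * rewrite !app_nth1 by lia. auto.
      * assert (S i = length a) by lia.
        rewrite app_nth1 by lia. rewrite app_nth2 by lia.
        replace (S i - length a)%nat with 0%nat by lia. simpl.
        apply Hin. apply nth_In. lia.
Qed.

Lemma form_mono a : is_form a -> forall i j, (i <= j < length a)%nat -> (nth i a 0 <= nth j a 0)%nat.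
Proof.
  intros [_ Hs] i j Hij. induction j.
  - assert (i = 0%nat) by lia. subst. lia.
  - destruct (Nat.eq_dec i (S j)); [subst; lia|].
    specialize (Hs j). specialize (IHj ltac:(lia)). specialize (Hs ltac:(lia)). lia.
Qed.

Lemma sum_lb (s : list nat) (p : nat) (c : R) :
  (forall k, In k s -> (1 <= k)%nat) ->
  (forall i, (p <= i < length s)%nat -> c <= INR (nth i s 0%nat)) ->
  INR (Nat.min p (length s)) + INR (length s - p) * c <= INR (list_sum s).
Proof.
  revert p. induction s as [|k s IH]; intros p H1 H2.
  - simpl. rewrite Nat.min_0_r. simpl. lra.
  - simpl list_sum. rewrite plus_INR. destruct p as [|p].
    + simpl length. rewrite Nat.sub_0_r.
      specialize (IH 0%nat ltac:(intros; apply H1; simpl; auto)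
        ltac:(intros i Hi; apply (H2 (S i)); simpl; lia)).
      rewrite Nat.sub_0_r in IH. rewrite Nat.min_0_l in IH |- *.
      pose proof (H2 0%nat ltac:(simpl; lia)). simpl in H.
      rewrite S_INR. simpl (INR 0) in *. lra.
    + simpl length. simpl Nat.min. replace (S (length s) - S p)%nat with (length s - p)%nat by lia.
      specialize (IH p ltac:(intros; apply H1; simpl; auto)
        ltac:(intros i Hi; apply (H2 (S i)); simpl; lia)).
      rewrite S_INR. assert (1 <= INR k) by (replace 1 with (INR 1) by (simpl; lra); apply le_INR; apply H1; simpl; auto). lra.
Qed.

Theorem lemma4p3 (C : R) (HC : standing_assumption C) (m : nat) (a : list nat) :
  (3 <= m)%nat ->
  INR m > 6 * C ^ 2 * (C + 1) ->
  escalator_leaf m a ->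
  (l_m C m <= length a)%nat ->
  INR (nth (l_m C m - 1) a 0%nat) >= C + 1 ->
  INR (length a) <= (1 - 1 / (C + 1) ^ 2) * (INR m - 2) + (C + 2) / (C + 1).
Proof.
  intros Hm _ [Hnode Huniv] Hl Hal.
  pose proof (node_form m a Hnode) as Hform.
  inversion Hnode as [E | a' t b Hn' Hu' Ht' Hb Hin Hrep E].
  { subst a. exfalso. destruct (Huniv 1%nat ltac:(lia)) as [x [_ Hv]].
    destruct x; simpl in Hv; discriminate. }
  subst a.
  assert (HN : exists N, (1 <= N)%nat /\ INR N <= C * (INR m - 2) /\ ~ represents m a' N).
  { apply NNPP. intro Hno. apply Hu'. apply (HC m a' Hm (node_form m a' Hn')).
    intros N H1 H2. apply NNPP. intro Hr. apply Hno. exists N. auto. }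
  destruct HN as [N [HN1 [HN2 HN3]]].
  assert (Hsum : (list_sum a' < N)%nat).
  { destruct (Nat.lt_ge_cases (list_sum a') N) as [|Hge]; auto.
    exfalso. apply HN3. apply (cover m a' Hm Hn'). lia. }
  assert (Hm3 : 3 <= INR m) by (replace 3 with (INR 3) by (simpl; lra); apply le_INR; auto).
  assert (HN1' : 1 <= INR N) by (replace 1 with (INR 1) by (simpl; lra); apply le_INR; auto).
  assert (HCpos : 0 < C).
  { destruct (Rle_or_lt C 0); auto. nra. }
  assert (Hsum' : INR (list_sum a') + 1 <= C * (INR m - 2)).
  { assert (Hs : (S (list_sum a') <= N)%nat) by lia.
    apply le_INR in Hs. rewrite S_INR in Hs. lra. }
  set (l := l_m C m) in *.
  assert (HL : INR l * (C + 1) <= INR m - 2).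
  { assert (INR l <= (INR m - 2) / (C + 1)).
    { unfold l, l_m. destruct (base_Int_part ((INR m - 2) / (C + 1))) as [B _].
      destruct (Z_lt_le_dec (Int_part ((INR m - 2) / (C + 1))) 0) as [Hz|Hz].
      - assert (E : Z.to_nat (Int_part ((INR m - 2) / (C + 1))) = 0%nat) by lia.
        rewrite E. simpl. apply Rmult_le_pos; [lra|].
        left; apply Rinv_0_lt_compat; lra.
      - rewrite INR_IZR_INZ, Z2Nat.id by auto. auto. }
    apply (Rmult_le_compat_r (C + 1)) in H; [|lra].
    unfold Rdiv in H. rewrite Rmult_assoc, Rinv_l in H by lra. lra. }
  rewrite length_app in Hl |- *. simpl length in *.
  assert (Hlb := sum_lb a' (l - 1) (C + 1)
    ltac:(intros k Hk; apply (proj1 Hform); apply in_or_app; auto)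
    ltac:(intros i Hi;
          assert (Hi' : (nth i (a' ++ [b]) 0 >= nth (l - 1) (a' ++ [b]) 0)%nat)
            by (apply form_mono; auto; rewrite length_app; simpl; lia);
          rewrite app_nth1 in Hi' by lia;
          apply le_INR in Hi'; lra)).
  rewrite Nat.min_l in Hlb by lia.
  rewrite plus_INR. simpl (INR 1).
  set (n := length a') in *.
  assert (Hkey : INR n * (C + 1) <= C * (INR m - 2) + C * INR l).
  { destruct (Nat.eq_dec l 0) as [E0|E0].
    - rewrite E0 in Hlb. simpl in Hlb. rewrite Nat.sub_0_r in Hlb. rewrite E0. simpl (INR 0) in *. nra.
    - rewrite minus_INR in Hlb by lia. rewrite minus_INR in Hlb by lia.
      rewrite minus_INR in Hlb by lia. simpl (INR 1) in Hlb. nra. }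
  assert (Hk2 : INR n * (C + 1) ^ 2 <= C * (C + 2) * (INR m - 2)) by nra.
  apply (Rmult_le_reg_r ((C + 1) ^ 2)); [nra|].
  replace (((1 - 1 / (C + 1) ^ 2) * (INR m - 2) + (C + 2) / (C + 1)) * (C + 1) ^ 2)
    with (C * (C + 2) * (INR m - 2) + (C + 2) * (C + 1)) by (field; lra).
  nra.
Qed.
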